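(* Let $(g,f)$ be a Riordan matrix with $g(t)=\sum_{j\ge0}g_jt^j$, $g_0=1$, possessing a type-II $B$-sequence, and let $Z(t)=\sum_{n\ge0}z_nt^n$ be the generating function of its $Z$-sequence. Then $Z'(0)=z_1=0$, or equivalently, $g_1^2=g_0g_2$.
   Context: Let $K$ be $\mathbb{R}$ or $\mathbb{C}$. A (proper) Riordan matrix is a pair $(g,f)$ of formal power series in $K[[t]]$ with $g(0)=1$, $f(0)=0$, $f'(0)\neq 0$, identified with the infinite lower triangular matrix $(d_{n,k})_{n,k\ge0}$, $d_{n,k}=[t^n]g(t)f(t)^k$; we set $d_{n,k}=0$ if $n<0$, $k<0$ or $k>n$. The $Z$-sequence of $(g,f)$ is the unique sequence whose generating function $Z(t)$ satisfies $g(t)=1/(1-tZ(f(t)))$. A type-II $B$-sequence is a sequence $(\hat b_j)_{j\ge0}$ such that $d_{n+1,0}=\sum_{j\ge0}\hat b_j d_{n-j,j}$ for all $n\ge0$. *)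

(* Defs.v *)
From mathcomp Require Import all_boot all_order all_algebra.
Set Implicit Arguments. Unset Strict Implicit. Unset Printing Implicit Defensive.
Import GRing.Theory Num.Theory.
Local Open Scope ring_scope.

Definition fps (K : numFieldType) := nat -> K.

Section FPS.
Variable K : numFieldType.

Definition fps_one : fps K := fun n => if n == 0%N then 1 else 0.

Definition fps_mul (a b : fps K) : fps K :=
  fun n => \sum_(i < n.+1) a i * b (n - i)%N.

Fixpoint fps_pow (a : fps K) (k : nat) : fps K :=
  if k is k'.+1 then fps_mul a (fps_pow a k') else fps_one.

Definition fps_shift (a : fps K) : fps K :=
  fun n => if n is n'.+1 then a n' else 0.

(* composition a(f(t)) for f(0) = 0: [t^n] a(f) = sum_{k<=n} a_k [t^n] f^k *)
Definition fps_comp (a f : fps K) : fps K :=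
  fun n => \sum_(k < n.+1) a k * fps_pow f k n.

Definition proper_riordan (g f : fps K) : Prop :=
  g 0%N = 1 /\ f 0%N = 0 /\ f 1%N != 0.

Definition riordan_entry (g f : fps K) (n k : nat) : K :=
  fps_mul g (fps_pow f k) n.

(* Z is the (generating function of the) Z-sequence: g = 1/(1 - t Z(f)),
   i.e. g * (1 - t Z(f)) = 1 *)
Definition is_Z_sequence (g f Z : fps K) : Prop :=
  fps_mul g (fun n => fps_one n - fps_shift (fps_comp Z f) n) = fps_one.

(* type-II B-sequence: d_{n+1,0} = sum_{j>=0} b_j d_{n-j,j};
   terms with j > n vanish since d_{m,k} = 0 for m < 0 *)
Definition is_typeII_B_sequence (g f b : fps K) : Prop :=
  forall n : nat, riordan_entry g f n.+1 0 =
    \sum_(j < n.+1) b j * riordan_entry g f (n - j)%N j.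

End FPS.

(* Main.v *)
Require Import Defs.
From mathcomp Require Import all_boot all_order all_algebra.
Import GRing.Theory Num.Theory.
Local Open Scope ring_scope.

Theorem proposition3p3 (K : numFieldType) (g f Z : fps K) :
  proper_riordan g f ->
  (exists b : fps K, is_typeII_B_sequence g f b) ->
  is_Z_sequence g f Z ->
  Z 1%N = 0 /\ g 1%N ^+ 2 = g 0%N * g 2%N.
Proof.
move=> [g0 [f0 f1]] [b hB] hZ.
have H0 := hB 0%N. have H1 := hB 1%N.
have Z1 := congr1 (fun F => F 1%N) hZ. have Z2 := congr1 (fun F => F 2%N) hZ.
move: H0 H1 Z1 Z2.
rewrite /riordan_entry /fps_mul /fps_shift /fps_comp /= !big_ord_recl !big_ord0 /=.
rewrite /fps_mul /= !big_ord_recl !big_ord0 /=.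
rewrite /bump /= g0 f0 /fps_one /=.
rewrite !(addn0, add0n, subn0, subnn) /=.
rewrite /fps_mul /= !big_ord_recl !big_ord0 /= /bump /= f0.
rewrite !(mulr0, mul0r, mulr1, mul1r, addr0, add0r, subr0, sub0r) /=.
move=> H0 H1 Z1 Z2. rewrite -[(1+1)%N]/2%N -[(1+0)%N]/1%N in H1 Z2.
have eZ0 : Z 0%N = g 1%N.
  by move/eqP: Z1; rewrite addrC subr_eq0 => /eqP.
have eg2 : g 2%N = g 1%N ^+ 2 by rewrite H1 H0 expr2.
split; last by rewrite eg2.
have : Z 1%N * f 1%N = 0.
  move: Z2; rewrite eZ0 eg2 expr2 => Z2.
  by move: Z2; rewrite mulrN addNr addr0 => /eqP; rewrite oppr_eq0 => /eqP.
move/eqP; rewrite mulf_eq0 (negbTE f1) orbF => /eqP //.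
Qed.
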